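(* Let $H$ be a digraph with at least two vertices and $r\in V(H)$ such that every vertex of $H$ is reachable from $r$, and let $(\hat T,\{B_x\}_{x\in V(\hat T)})$ be the $r$-rooted cut decomposition of $H$. For every vertex $u\in V(H)$ and every set $X\subseteq V(H)\setminus(V(\hat T)\cup\{u\})$ there exists a directed path $P$ from $r$ to $u$ in $H$ with $|V(P)\cap X|\le |X|/2$.
   Context: Digraphs are finite and without loops; paths are directed. A vertex $v$ is bi-reachable from $r$ if there are two internally vertex-disjoint directed paths from $r$ to $v$. For a digraph $H$ with at least two vertices and $r\in V(H)$ such that every vertex of $H$ is reachable from $r$, the diblock $B_r$ of $r$ in $H$ is the set of all vertices bi-reachable from $r$, together with $r$ and all out-neighbours of $r$. For $x\in B_r\setminus\{r\}$ let $X_x$ be the set of vertices $v\in V(H)\setminus B_r$ such that every directed $r$–$v$ path intersects $B_r$ for the last time in $x$; $x$ is a bottleneck of $B_r$ if $X_x\ne\emptyset$ (the sets $X_x$ partition $V(H)\setminus B_r$). The $r$-rooted cut decomposition $(\hat T,\{B_x\}_{x\in V(\hat T)})$ of $H$ is defined recursively: $\hat T$ is a rooted tree with root $r$ and $V(\hat T)\subseteq V(H)$; the set associated with the root is $B_r$; the children of $r$ are the bottlenecks of $B_r$; and for each bottleneck $x$, the subtree of $\hat T$ rooted at $x$ together with its associated sets is the $x$-rooted cut decomposition of the induced subgraph $H[X_x\cup\{x\}]$. *)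

(* Defs.v *)
(* Digraph H = (T, e) with T : finType (vertex set), e : rel T
   (arc relation). Vertex subsets of the current (induced) subgraph are
   Prop-valued predicates S : T -> Prop. *)
From mathcomp Require Import all_boot.
Set Implicit Arguments. Unset Strict Implicit. Unset Printing Implicit Defensive.

Section Digraph.
Variables (T : finType) (e : rel T).

(* A directed path a :: p from a to b in the induced subgraph H[S]:
   consecutive vertices joined by arcs, ends at b, no repeated vertex,
   all vertices in S.  V(P) = a :: p. *)
Definition dpath (S : T -> Prop) (a b : T) (p : seq T) : Prop :=
  [/\ path e a p, last a p = b, uniq (a :: p) & forall v, v \in a :: p -> S v].

Definition interior (a b : T) (p : seq T) (v : T) : Prop :=
  v \in a :: p /\ v <> a /\ v <> b.

Definition bireach (S : T -> Prop) (r v : T) : Prop :=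
  exists p q, [/\ dpath S r v p, dpath S r v q, p <> q &
    forall w, interior r v p w -> interior r v q w -> False].

Definition diblock (S : T -> Prop) (r v : T) : Prop :=
  S v /\ (v = r \/ e r v \/ bireach S r v).

Definition last_in (B : T -> Prop) (r : T) (p : seq T) (x : T) : Prop :=
  exists p1 p2, [/\ r :: p = p1 ++ x :: p2, B x & forall w, w \in p2 -> ~ B w].

Definition Xset (S : T -> Prop) (r x v : T) : Prop :=
  [/\ S v, ~ diblock S r v &
    forall p, dpath S r v p -> last_in (diblock S r) r p x].

Definition bottleneck (S : T -> Prop) (r x : T) : Prop :=
  [/\ diblock S r x, x <> r & exists v, Xset S r x v].

(* tree_vertex S r v : v is a vertex of the tree of the r-rooted cut
   decomposition of H[S] (defined recursively: the root r, and the vertices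
   of the x-rooted cut decompositions of H[X_x + x] for the bottlenecks x). *)
Inductive tree_vertex : (T -> Prop) -> T -> T -> Prop :=
| tv_root S r : tree_vertex S r r
| tv_child S r x v : bottleneck S r x ->
    tree_vertex (fun w => Xset S r x w \/ w = x) x v -> tree_vertex S r v.

End Digraph.

(* Main.v *)
Require Import Defs.
From mathcomp Require Import all_boot zify.
From Stdlib Require Import Classical.
Set Implicit Arguments. Unset Strict Implicit. Unset Printing Implicit Defensive.

Section Aux.
Variable T : finType.
Implicit Types (e : rel T) (S : T -> Prop).

Lemma splitr_ex (p : seq T) x : x \in p -> exists p1 p2, p = p1 ++ x :: p2.
Proof. by case/splitPr => p1 p2; exists p1, p2. Qed.

Lemma split_find_ex (a : pred T) (s : seq T) : has a s ->
  exists x s1 s2, [/\ s = rcons s1 x ++ s2, a x & ~~ has a s1].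
Proof. by case/split_find => x s1 s2 ax hs; exists x, s1, s2. Qed.

Lemma mem_last_ne (x : T) (p : seq T) : p != [::] -> last x p \in p.
Proof. by case: p => [//|y t] _ /=; apply: mem_last. Qed.

Lemma last_ne (x y : T) (p : seq T) : p != [::] -> last x p = last y p.
Proof. by case: p. Qed.

Lemma walk_dpath e S x p : path e x p -> (forall v, v \in x :: p -> S v) ->
  exists p', dpath e S x (last x p) p' /\ {subset p' <= p}.
Proof.
move=> hp hS; case: (shortenP hp) => p' hp' hu hsub.
exists p'; split=> //; split=> // v; rewrite inE => /orP [/eqP -> | /hsub hv];
  apply: hS; rewrite inE ?eqxx ?hv ?orbT //.
Qed.

Lemma dpath_S e S s w p : dpath e S s w p -> S w.
Proof. by case=> _ <- _ hS; apply: hS; apply: mem_last. Qed.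

Definition twopaths e S s w := exists p q,
  [/\ dpath e S s w p, dpath e S s w q & forall v, v \in p -> v \in q -> v = w].

Lemma fin2 e S s w W1 W2 : path e s W1 -> path e s W2 -> last s W1 = w -> last s W2 = w ->
  (forall v, v \in s :: W1 -> S v) -> (forall v, v \in s :: W2 -> S v) ->
  (forall v, v \in W1 -> v \in W2 -> v = w) -> twopaths e S s w.
Proof.
move=> h1 h2 l1 l2 s1 s2 hd.
have [p [hp sp]] := walk_dpath h1 s1. have [q [hq sq]] := walk_dpath h2 s2.
rewrite l1 in hp; rewrite l2 in hq.
by exists p, q; split=> // v /sp h /sq h'; apply: hd h h'.
Qed.

Definition ep e s a : rel T := fun x y => e x y || (x == a) && e s y.

Lemma path_ep e s a x t : path (ep e s a) x t -> a \notin x :: t -> path e x t.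
Proof.
elim: t x => [//|y t IH] x /= /andP [hxy hp]; rewrite !inE negb_or => /andP [hxa hr].
rewrite (IH y hp hr) andbT. move: hxy; rewrite /ep.
have -> : (x == a) = false by rewrite eq_sym (negbTE hxa).
by rewrite orbF.
Qed.

Lemma conv e S s a w p : dpath e S s w p -> s != w -> e s a -> S a -> a != s ->
  exists p', dpath (ep e s a) (fun v => S v /\ v <> s) a w p' /\ {subset p' <= p}.
Proof.
case=> hp hl hu hS hsw hsa hSa has.
case: p hp hl hu hS => [|b t] hp hl hu hS; first by rewrite /= in hl; rewrite hl eqxx in hsw.
have hp' : path (ep e s a) a (b :: t).
  move: hp => /= /andP [hsb hbt]; rewrite /ep eqxx hsb orbT /=.
  by apply: sub_path hbt => x y h; rewrite /ep h.
have [|p' [hd hsub]] := walk_dpath (S := fun v => S v /\ v <> s) hp'.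
  move=> v; rewrite inE => /orP [/eqP -> | hv]; first by split=> //; apply/eqP.
  split; first by apply: hS; rewrite inE hv orbT.
  move=> hvs; subst v; move: hu; rewrite /= hv; by [].
by exists p'; split=> //; rewrite /= in hl; rewrite -hl.
Qed.

Lemma lift e S s a w p : dpath (ep e s a) (fun v => S v /\ v <> s) a w p -> a != w ->
  [/\ path e s p \/ path e a p, last a p = w, a \notin p,
      (forall v, v \in p -> S v /\ v <> s) & p != [::]].
Proof.
case=> hp hl hu hS haw.
case: p hp hl hu hS => [|b t] hp hl hu hS; first by rewrite /= in hl; rewrite hl eqxx in haw.
move: (hu); rewrite /= => /andP [hab _].
split=> //; last first.
- by move=> v hv; apply: hS; rewrite inE hv orbT.
move: hp => /= /andP [h1 h2].
have h3 : path e b t by apply: path_ep h2 hab.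
move: h1; rewrite /ep eqxx /= => /orP [h | h]; [right | left]; by rewrite /= h h3.
Qed.


Lemma whit_aux e S s a w P Q C1 c C2 P1 P2 : S s -> e s a -> S a ->
  path e s (rcons C1 c ++ C2) -> (forall v, v \in rcons C1 c ++ C2 -> S v) ->
  a \notin rcons C1 c ++ C2 -> ~~ has (mem (P ++ Q)) C1 ->
  P = P1 ++ c :: P2 -> path e a P -> last a P = w -> a \notin P -> (forall v, v \in P -> S v) ->
  path e a Q -> last a Q = w -> (forall v, v \in Q -> S v) ->
  (forall v, v \in P -> v \in Q -> v = w) -> twopaths e S s w.
Proof.
move=> hs hsa hSa hC hSC haC hnh hP hpP hlP haP hSP hpQ hlQ hSQ hd.
apply: (@fin2 e S s w (rcons C1 c ++ P2) (a :: Q)).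
- rewrite cat_path; move: hC; rewrite cat_path => /andP [-> _] /=.
  move: hpP; rewrite hP cat_path => /andP [_]; by rewrite last_rcons /= => /andP [_ ->].
- by rewrite /= hsa hpQ.
- by rewrite last_cat last_rcons -hlP hP last_cat.
- by [].
- move=> v; rewrite inE => /orP [/eqP -> //|]; rewrite mem_cat => /orP [hv|hv].
    by apply: hSC; rewrite mem_cat hv.
  by apply: hSP; rewrite hP mem_cat inE hv !orbT.
- move=> v; rewrite !inE => /orP [/eqP -> //|/orP [/eqP -> //|hv]]; exact: hSQ.
- move=> v; rewrite mem_cat mem_rcons inE => /orP [/orP [/eqP hvc|hv1]|hv2] hv.
  + subst v. have hcP : c \in P by rewrite hP mem_cat inE eqxx orbT.
    move: hv; rewrite inE => /orP [/eqP hca|hv]; last exact: hd.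
    by subst c; rewrite hcP in haP.
  + move: hv; rewrite inE => /orP [/eqP hva|hv].
      by subst v; move: haC; rewrite mem_cat mem_rcons inE hv1 orbT.
    by move/hasPn: hnh => /(_ v hv1); rewrite /= mem_cat hv orbT.
  + have hvP : v \in P by rewrite hP mem_cat inE hv2 !orbT.
    move: hv; rewrite inE => /orP [/eqP hva|hv]; last exact: hd.
    by subst v; rewrite hvP in haP.
Qed.

Lemma whitney e S s a w P Q C : S s -> e s a -> S a ->
  path e a P -> last a P = w -> a \notin P -> (forall v, v \in P -> S v) ->
  path e a Q -> last a Q = w -> a \notin Q -> (forall v, v \in Q -> S v) ->
  (forall v, v \in P -> v \in Q -> v = w) ->
  dpath e S s w C -> a \notin C -> s != w -> twopaths e S s w.
Proof.
move=> hs hsa hSa hpP hlP haP hSP hpQ hlQ haQ hSQ hd [hpC hlC huC hSC] haC hsw.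
have hCne : C != [::] by case: C hpC hlC huC hSC haC => //= hp hl; rewrite hl eqxx in hsw.
have hwC : w \in C by rewrite -hlC; apply: mem_last_ne.
have haw : a != w by apply/eqP => haw; subst a; rewrite hwC in haC.
have hPne : P != [::] by case: P hpP hlP haP hSP hd => //= _ hl; rewrite hl eqxx in haw.
have hwP : w \in P by rewrite -hlP; apply: mem_last_ne.
have : has (mem (P ++ Q)) C by apply/hasP; exists w => //=; rewrite mem_cat hwP.
case/split_find_ex => c [C1 [C2 [hCe hc hnh]]]. subst C.
have hSC' : forall v, v \in rcons C1 c ++ C2 -> S v by move=> v hv; apply: hSC; rewrite inE hv orbT.
move: hc; rewrite /= mem_cat => /orP [hc|hc].
- case: (splitr_ex hc) => P1 [P2 hPe].
  exact: (whit_aux hs hsa hSa hpC hSC' haC hnh hPe hpP hlP haP hSP hpQ hlQ hSQ hd).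
- case: (splitr_ex hc) => Q1 [Q2 hQe].
  have hnh' : ~~ has (mem (Q ++ P)) C1.
    apply/hasPn => v hv; move/hasPn: hnh => /(_ v hv); by rewrite /= !mem_cat orbC.
  apply: (whit_aux hs hsa hSa hpC hSC' haC hnh' hQe hpQ hlQ haQ hSQ hpP hlP hSP).
  by move=> v h1 h2; apply: hd.
Qed.

Lemma filter_lt (l : seq T) s : s \in l -> size (filter (predC1 s) l) < size l.
Proof.
move=> hs; have := count_predC (predC1 s) l.
have : 0 < count (predC (predC1 s)) l.
  by rewrite -has_count; apply/hasP; exists s => //=; rewrite eqxx.
move=> h1 h2; rewrite size_filter -h2.
by rewrite -[X in X < _]addn0 ltn_add2l.
Qed.

Lemma menger2 n : forall e S s w (l : seq T), size l <= n -> (forall v, S v -> v \in l) ->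
  S s -> s != w -> (exists p, dpath e S s w p) ->
  (forall z, z != s -> z != w -> exists p, dpath e S s w p /\ z \notin p) -> twopaths e S s w.
Proof.
elim: n => [|n IH] e S s w l hl hSl hs hsw [p0 hp0] hsep.
  by move: (hSl _ hs) hl; clear hSl; case: l.
have hSw := dpath_S hp0.
case hsw': (e s w).
  apply: (@fin2 e S s w [:: w] [:: w]) => //=; try by rewrite hsw'.
  - by move=> v; rewrite !inE => /orP [/eqP -> | /eqP ->].
  - by move=> v; rewrite !inE => /orP [/eqP -> | /eqP ->].
  - by move=> v; rewrite inE => /eqP.
case: (hp0) => hpp hlp hup hSp.
case: p0 hp0 hpp hlp hup hSp => [|a t0] hp0 hpp hlp hup hSp.
  by rewrite /= in hlp; rewrite hlp eqxx in hsw.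
move: (hpp) => /= /andP [hsa _].
have hSa : S a by apply: hSp; rewrite !inE eqxx orbT.
have has : a != s by move: hup => /= /andP []; rewrite inE negb_or eq_sym => /andP [].
have haw : a != w by apply/eqP => haw; subst a; rewrite hsa in hsw'.
have [C [hC haC]] := hsep a has haw.
set S' := fun v => S v /\ v <> s.
have htw : twopaths (ep e s a) S' a w.
  apply: (IH _ S' a w (filter (predC1 s) l)) => //.
  - by rewrite -ltnS; apply: leq_trans (filter_lt (hSl _ hs)) hl.
  - by move=> v [hv hvs]; rewrite mem_filter /= hSl // andbT; apply/eqP.
  - by split=> //; apply/eqP.
  - by have [p' [hd _]] := conv hp0 hsw hsa hSa has; exists p'.
  - move=> z hza hzw; case: (eqVneq z s) => hzs.
      have [p' [hd _]] := conv hp0 hsw hsa hSa has; exists p'; split=> //.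
      subst z; apply/negP => hs'; case: hd => _ _ _ /(_ s); rewrite inE hs' orbT.
      by move=> /(_ isT) [].
    have [pz [hpz hz]] := hsep z hzs hzw.
    have [p' [hd hsub]] := conv hpz hsw hsa hSa has; exists p'; split=> //.
    by apply/negP => /hsub; rewrite (negbTE hz).
case: htw => p' [q' [hp' hq' hd]].
have [hk1 hl1 ha1 hS1 hne1] := lift hp' haw.
have [hk2 hl2 ha2 hS2 hne2] := lift hq' haw.
have hl1' : last s p' = w by rewrite (@last_ne s a p' hne1).
have hl2' : last s q' = w by rewrite (@last_ne s a q' hne2).
have hSs1 : forall v, v \in s :: p' -> S v.
  by move=> v; rewrite inE => /orP [/eqP -> //| /hS1 []].
have hSs2 : forall v, v \in s :: q' -> S v.
  by move=> v; rewrite inE => /orP [/eqP -> //| /hS2 []].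
have hSa1 : forall v, v \in s :: a :: p' -> S v.
  by move=> v; rewrite inE => /orP [/eqP -> //| ]; rewrite inE => /orP [/eqP -> //| /hS1 []].
have hSa2 : forall v, v \in s :: a :: q' -> S v.
  by move=> v; rewrite inE => /orP [/eqP -> //| ]; rewrite inE => /orP [/eqP -> //| /hS2 []].
case: hk1 => hk1; case: hk2 => hk2.
- exact: (fin2 hk1 hk2 hl1' hl2' hSs1 hSs2 hd).
- apply: (@fin2 e S s w p' (a :: q')) => //=; first by rewrite hsa hk2.
  move=> v hv; rewrite inE => /orP [/eqP hva|]; last exact: hd.
  by subst v; rewrite hv in ha1.
- apply: (@fin2 e S s w (a :: p') q') => //=; first by rewrite hsa hk1.
  move=> v; rewrite inE => /orP [/eqP hva hv|hv hv']; last exact: hd.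
  by subst v; rewrite hv in ha2.
- apply: (whitney hs hsa hSa hk1 hl1 ha1 _ hk2 hl2 ha2 _ hd hC haC hsw).
  + by move=> v /hS1 [].
  + by move=> v /hS2 [].
Qed.

Lemma diblock_two e S r x : S r -> diblock e S r x -> twopaths e S r x.
Proof.
move=> hr [hSx hx].
have hS1 : forall v, v \in [:: r] -> S v by move=> v; rewrite inE => /eqP ->.
case: (eqVneq x r) => hxr.
  subst x; apply: (@fin2 e S r r [::] [::]) => //.
case: hx => [hx|[hx|[p [q [hp hq hpq hint]]]]]; first by rewrite hx eqxx in hxr.
- apply: (@fin2 e S r x [:: x] [:: x]) => //=; try by rewrite hx.
  + by move=> v; rewrite !inE => /orP [/eqP -> | /eqP ->].
  + by move=> v; rewrite !inE => /orP [/eqP -> | /eqP ->].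
  + by move=> v; rewrite inE => /eqP.
- exists p, q; split=> // v hvp hvq.
  case: (eqVneq v x) => // hvx; exfalso.
  have hvr : v <> r.
    move=> hvr; subst v; case: hp => _ _ /= /andP [] /negP; by [].
  apply: (hint v); split; rewrite ?inE ?hvp ?hvq ?orbT //; split=> //; exact/eqP.
Qed.

Lemma two_diblock e S r w : twopaths e S r w -> r != w -> diblock e S r w.
Proof.
case=> p [q [hp hq hd]] hrw.
split; first exact: dpath_S hp.
right; case: (eqVneq p q) => hpq.
- subst q; left; clear hq.
  case: hp hd => hpp hl hu hS hd.
  case: p hpp hl hu hS hd => [|b t] hpp hl hu hS hd.
    by rewrite /= in hl; rewrite hl eqxx in hrw.
  have hb : b = w by apply: hd; rewrite inE eqxx.
  subst b; case: t hpp hl hu hS hd => [|c t] hpp hl hu hS hd.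
    by move: hpp => /= /andP [].
  have hc : c = w by apply: hd; rewrite !inE eqxx orbT.
  by subst c; move: hu => /= /andP [_ /andP []]; rewrite inE eqxx.
- right; exists p, q; split=> //; first exact/eqP.
  move=> v [hv1 [hv1r hv1w]] [hv2 [hv2r hv2w]].
  apply: hv1w; apply: hd.
  + by move: hv1; rewrite inE => /orP [/eqP //|].
  + by move: hv2; rewrite inE => /orP [/eqP //|].
Qed.

Lemma last_in_ex (B : T -> Prop) r (p : seq T) : B r -> exists x, last_in B r p x.
Proof.
move=> hBr; elim/last_ind: p => [|p z [x [p1 [p2 [he hBx hn]]]]].
  by exists r, [::], [::]; split.
case: (classic (B z)) => hBz.
  by exists z, (r :: p), [::]; split=> //; rewrite -cats1.
exists x, p1, (rcons p2 z); split=> //.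
  by rewrite -rcons_cons he rcons_cat.
by move=> w; rewrite mem_rcons inE => /orP [/eqP -> //|/hn].
Qed.

Lemma suf e r (P : seq T) l1 x l2 : r :: P = l1 ++ x :: l2 -> path e r P ->
  [/\ path e x l2, last x l2 = last r P & {subset x :: l2 <= r :: P}].
Proof.
case: l1 => [|y l1] /=.
  by case=> <- <- hp; split.
case=> hy hP; subst y P => hp; split.
- by move: hp; rewrite cat_path => /andP [_ /= /andP [_ ->]].
- by rewrite last_cat.
- by move=> v hv; rewrite inE mem_cat hv !orbT.
Qed.

Lemma gw e S r x PA Q : dpath e S r x PA -> path e x Q -> (forall v, v \in Q -> S v) ->
  exists p, dpath e S r (last x Q) p /\ {subset p <= PA ++ Q}.
Proof.
case=> hp hl hu hS hq hSQ.
have hw : path e r (PA ++ Q) by rewrite cat_path hp hl hq.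
have := walk_dpath (S := S) hw; rewrite last_cat hl; apply.
move=> v; rewrite inE mem_cat => /orP [/eqP ->|/orP [hv|hv]].
- by apply: hS; rewrite inE eqxx.
- by apply: hS; rewrite inE hv orbT.
- exact: hSQ.
Qed.
Lemma key e S r x1 x2 Q1 Q2 : S r -> diblock e S r x1 -> diblock e S r x2 ->
  path e x1 Q1 -> path e x2 Q2 -> last x1 Q1 = last x2 Q2 ->
  (forall v, v \in Q1 -> S v /\ ~ diblock e S r v) ->
  (forall v, v \in Q2 -> S v /\ ~ diblock e S r v) -> x1 = x2.
Proof.
move=> hr hB1 hB2 hp1 hp2 hl h1 h2.
case: (eqVneq x1 x2) => // hne; exfalso.
have [hQ1|hQ1] := eqVneq Q1 [::].
  subst Q1; rewrite /= in hl.
  have [hQ2|hQ2] := eqVneq Q2 [::]; first by subst Q2; rewrite /= in hl; rewrite hl eqxx in hne.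
  have := mem_last_ne x2 hQ2; rewrite -hl => /h2 [_]; exact.
have [hQ2|hQ2] := eqVneq Q2 [::].
  subst Q2; rewrite /= in hl.
  have := mem_last_ne x1 hQ1; rewrite hl => /h1 [_]; exact.
have : has (mem Q2) Q1.
  apply/hasP; exists (last x1 Q1); first exact: mem_last_ne.
  by rewrite /= hl mem_last_ne.
case/split_find_ex => w [s1 [s2 [hQ1e hwQ2 hnh]]].
have hwQ1 : w \in Q1 by rewrite hQ1e mem_cat mem_rcons inE eqxx.
have [hSw hnBw] := h1 _ hwQ1.
case: (splitr_ex hwQ2) => q1 [q2 hQ2e].
have hrw : r != w by apply/eqP => hrw; subst w; apply: hnBw; split=> //; left.
apply: hnBw; apply: two_diblock => //.
have [PA [PB [hPA hPB hdA]]] := diblock_two hr hB1.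
have [PA2 [PB2 [hPA2 hPB2 hdA2]]] := diblock_two hr hB2.
have hq1 : path e x1 (rcons s1 w) by move: hp1; rewrite hQ1e cat_path => /andP [].
have hS1' : forall v, v \in rcons s1 w -> S v.
  by move=> v hv; apply: (proj1 (h1 v _)); rewrite hQ1e mem_cat hv.
have hq2 : path e x2 (rcons q1 w) by move: hp2; rewrite hQ2e -cat_rcons cat_path => /andP [].
have hS2' : forall v, v \in rcons q1 w -> S v.
  by move=> v hv; apply: (proj1 (h2 v _)); rewrite hQ2e -cat_rcons mem_cat hv.
apply: (@menger2 (size (enum T)) e S r w (enum T)) => //.
- by move=> v _; rewrite mem_enum.
- by have [p [hp _]] := gw hPA hq1 hS1'; rewrite last_rcons in hp; exists p.
move=> z hzr hzw.
have avoid : forall x PA' Q', dpath e S r x PA' -> path e x Q' -> (forall v, v \in Q' -> S v) ->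
    last x Q' = w -> z \notin PA' ++ Q' -> exists p, dpath e S r w p /\ z \notin p.
  move=> x PA' Q' hd hq hS hlq hz; have [p [hp hsub]] := gw hd hq hS.
  by rewrite hlq in hp; exists p; split => //; apply/negP => /hsub; rewrite (negbTE hz).
case: (boolP (z \in PA ++ rcons s1 w)) => hz1; last exact: (avoid _ _ _ hPA hq1 hS1' (last_rcons _ _ _) hz1).
case: (boolP (z \in PB ++ rcons s1 w)) => hz2; last exact: (avoid _ _ _ hPB hq1 hS1' (last_rcons _ _ _) hz2).
case: (boolP (z \in PA2 ++ rcons q1 w)) => hz3; last exact: (avoid _ _ _ hPA2 hq2 hS2' (last_rcons _ _ _) hz3).
case: (boolP (z \in PB2 ++ rcons q1 w)) => hz4; last exact: (avoid _ _ _ hPB2 hq2 hS2' (last_rcons _ _ _) hz4).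
exfalso.
have hA : (z == x1) || (z \in s1).
  move: hz1 hz2; rewrite !mem_cat !mem_rcons !inE (negbTE hzw) /=.
  case/orP => ha; case/orP => hb; rewrite ?ha ?hb ?orbT //.
  by rewrite (hdA z ha hb) eqxx.
have hB : (z == x2) || (z \in q1).
  move: hz3 hz4; rewrite !mem_cat !mem_rcons !inE (negbTE hzw) /=.
  case/orP => ha; case/orP => hb; rewrite ?ha ?hb ?orbT //.
  by rewrite (hdA2 z ha hb) eqxx.
move: hA hB => /orP [/eqP hzx1|hzs1] /orP [/eqP hzx2|hzq1].
- by rewrite -hzx1 -hzx2 eqxx in hne.
- have : x1 \in Q2 by rewrite hQ2e mem_cat -hzx1 hzq1.
  by move=> /h2 [_]; apply.
- have : x2 \in Q1 by rewrite hQ1e mem_cat mem_rcons inE -hzx2 hzs1 !orbT.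
  by move=> /h1 [_]; apply.
- by move/hasPn: hnh => /(_ z hzs1); rewrite /= hQ2e mem_cat hzq1.
Qed.
Lemma pref e S r x q v : dpath e S r x q -> v \in q -> v != x -> ~ Xset e S r x v.
Proof.
case=> hp hl hu hS hvq hvx [_ _ hall].
case: (splitr_ex hvq) => q1 [q2 hqe]; subst q.
have hw : path e r (rcons q1 v) by move: hp; rewrite -cat_rcons cat_path => /andP [].
have [|p'' [hd hsub]] := walk_dpath (S := S) hw.
  move=> w; rewrite inE mem_rcons inE => /orP [/eqP ->|/orP [/eqP ->|hw']]; apply: hS.
  - by rewrite inE eqxx.
  - by rewrite inE mem_cat inE eqxx !orbT.
  - by rewrite inE mem_cat hw' orbT.
rewrite last_rcons in hd.
case: (hall _ hd) => m1 [m2 [he _ _]].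
have hx : x \in r :: p'' by rewrite he mem_cat inE eqxx orbT.
have hx' : x \in r :: q1.
  move: hx; rewrite inE => /orP [hxr|/hsub]; first by rewrite inE hxr.
  rewrite mem_rcons inE eq_sym (negbTE hvx) /= => hh.
  by rewrite inE hh orbT.
have : uniq ((r :: q1) ++ (v :: q2)) by [].
rewrite cat_uniq => /and3P [_ hnh _].
move: hl; rewrite last_cat /= => hl.
have [hq2|hq2] := eqVneq q2 [::].
  by subst q2; rewrite /= in hl; rewrite hl eqxx in hvx.
have hxq2 : x \in v :: q2 by rewrite inE -hl mem_last_ne ?orbT.
by move/hasPn: hnh => /(_ x hxq2); rewrite /= hx'.
Qed.

Lemma inherit e S r x v : S r -> (forall v, S v -> exists p, dpath e S r v p) -> Xset e S r x v ->
  exists p, dpath e (fun w => Xset e S r x w \/ w = x) x v p.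
Proof.
move=> hr hreach hX; case: (hX) => hSv hnBv hall.
have [P hP] := hreach v hSv.
case: (hall _ hP) => l1 [l2 [he hBx hn]].
case: (hP) => hpP hlP _ hSP.
have [hp2 hl2 hsub2] := suf he hpP.
have := walk_dpath (S := fun w => Xset e S r x w \/ w = x) hp2.
rewrite hl2 hlP; case.
  move=> w; rewrite inE => /orP [/eqP ->|hw]; first by right.
  left; have hSw : S w by apply: hSP; apply: hsub2; rewrite inE hw orbT.
  split=> //; first exact: hn w hw.
  move=> p hp.
  have [y [m1 [m2 [he' hBy hn']]]] := last_in_ex p (B := diblock e S r) (conj hr (or_introl erefl)).
  case: (hp) => hpp hlp _ hSp.
  have [hpm2 hlm2 hsubm2] := suf he' hpp.
  case: (splitr_ex hw) => a1 [a2 hl2e].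
  have hpa : path e x (rcons a1 w) by move: hp2; rewrite hl2e -cat_rcons cat_path => /andP [].
  have hyx : y = x.
    apply: (key hr hBy hBx hpm2 hpa).
    - by rewrite last_rcons hlm2 hlp.
    - move=> u hu; split; last exact: hn' u hu.
      by apply: hSp; apply: hsubm2; rewrite inE hu orbT.
    - move=> u; rewrite mem_rcons inE => hu.
      have hu2 : u \in l2 by move: hu => /orP [/eqP ->|hu]; rewrite hl2e mem_cat ?inE ?eqxx ?hu ?orbT.
      split; last exact: hn u hu2.
      by apply: hSP; apply: hsub2; rewrite inE hu2 orbT.
  by subst y; exists m1, m2.
by move=> p [hd _]; exists p.
Qed.
Lemma stepA e S r y (X : {set T}) : S r -> diblock e S r y -> r \notin X -> y \notin X ->
  exists p (Z : {set T}), [/\ dpath e S r y p,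
     (forall v, v \in Z -> exists q, dpath e S r y q /\ v \in q) &
     2 * #|[set v in X | v \in r :: p]| <= #|X :&: Z|].
Proof.
move=> hr hB hrX hyX.
have [pa [pb [hpa hpb hd]]] := diblock_two hr hB.
pose Z := [set v | (v \in pa) || (v \in pb)].
have hZ : forall v, v \in Z -> exists q, dpath e S r y q /\ v \in q.
  by move=> v; rewrite inE => /orP [h|h]; [exists pa | exists pb].
have hAB : #|[set v in X | v \in r :: pa]| + #|[set v in X | v \in r :: pb]| <= #|X :&: Z|.
  have hI : [set v in X | v \in r :: pa] :&: [set v in X | v \in r :: pb] = set0.
    apply/setP => v; rewrite !inE; apply/negbTE; apply/negP.
    move=> /andP [/andP [hX ha] /andP [_ hb]].
    case/orP: ha => [/eqP hvr|ha]; first by subst v; rewrite hX in hrX.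
    case/orP: hb => [/eqP hvr|hb]; first by subst v; rewrite hX in hrX.
    by have hvy := hd v ha hb; subst v; rewrite hX in hyX.
  have := cardsU [set v in X | v \in r :: pa] [set v in X | v \in r :: pb].
  rewrite hI cards0 subn0 => <-.
  apply: subset_leq_card; apply/subsetP => v; rewrite !inE.
  case/orP => /andP [hX hv]; rewrite hX /=; move: hv => /orP [/eqP hvr|->];
    rewrite ?orbT //; by subst v; rewrite hX in hrX.
case: (leqP #|[set v in X | v \in r :: pa]| #|[set v in X | v \in r :: pb]|) => hc.
- by exists pa, Z; split=> //; lia.
- by exists pb, Z; split=> //; lia.
Qed.

Lemma MI e n : forall S r (l : seq T), size l <= n -> (forall v, S v -> v \in l) -> S r ->
  (forall v, S v -> exists p, dpath e S r v p) ->
  forall u (X : {set T}), S u -> (forall v, v \in X -> ~ tree_vertex e S r v /\ v <> u) ->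
  exists p, dpath e S r u p /\ 2 * #|[set v in X | v \in r :: p]| <= #|X|.
Proof.
elim: n => [|n IH] S r l hl hSl hr hreach u X hu hX.
  by move: (hSl _ hr) hl; clear hSl; case: l.
have hBr : diblock e S r r by split=> //; left.
have hrX : r \notin X by apply/negP => /hX [h _]; exact: h (tv_root e S r).
case: (classic (diblock e S r u)) => hBu.
  have huX : u \notin X by apply/negP => /hX [_]; apply.
  have [p [Z [hp _ hc]]] := stepA hr hBu hrX huX.
  exists p; split=> //; apply: leq_trans hc _; apply: subset_leq_card; apply: subsetIl.
have [P hP] := hreach u hu.
have [x [l1 [l2 [he hBx hn]]]] := last_in_ex P (B := diblock e S r) hBr.
case: (hP) => hpP hlP huP hSP.
have [hp2 hl2 hsub2] := suf he hpP.
rewrite hlP in hl2.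
have hxr : x != r.
  apply/eqP => hxr; subst x.
  case: l2 he hn hp2 hl2 hsub2 => [|b t] he hn hp2 hl2 hsub2.
    by rewrite /= in hl2; rewrite -hl2 in hBu; exact: hBu hBr.
  move: hp2 => /= /andP [hrb _].
  apply: (hn b); first by rewrite inE eqxx.
  split; last by right; left.
  by apply: hSP; apply: hsub2; rewrite !inE eqxx orbT.
have hXu : Xset e S r x u.
  split=> // p hp.
  have [y [m1 [m2 [he' hBy hn']]]] := last_in_ex p (B := diblock e S r) hBr.
  case: (hp) => hpp hlp _ hSp.
  have [hpm2 hlm2 hsubm2] := suf he' hpp.
  have hyx : y = x.
    apply: (key hr hBy hBx hpm2 hp2).
    - by rewrite hlm2 hlp hl2.
    - move=> w hw; split; last exact: hn' w hw.
      by apply: hSp; apply: hsubm2; rewrite inE hw orbT.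
    - move=> w hw; split; last exact: hn w hw.
      by apply: hSP; apply: hsub2; rewrite inE hw orbT.
  by subst y; exists m1, m2.
have hbot : bottleneck e S r x by split=> //; [exact/eqP | exists u].
pose S' := fun w => Xset e S r x w \/ w = x.
have hxX : x \notin X.
  by apply/negP => /hX [h _]; exact: h (tv_child hbot (tv_root e S' x)).
have [p1 [Z [hp1 hZ hc1]]] := stepA hr hBx hrX hxX.
have hSx : S x by case: hBx.
have [p' [hp' hc']] : exists p', dpath e S' x u p' /\
    2 * #|[set v in X :\: Z | v \in x :: p']| <= #|X :\: Z|.
  apply: (IH S' x (filter (predC1 r) l)) => //.
  - by rewrite -ltnS; apply: leq_trans (filter_lt (hSl _ hr)) hl.
  - move=> v hv; rewrite mem_filter /=.
    case: hv => [[hSv hnB _]|->].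
      rewrite hSl // andbT; apply/eqP => hvr; subst v; exact: hnB hBr.
    by rewrite hSl // andbT.
  - by right.
  - move=> v [hv|->]; first exact: inherit hr hreach hv.
    exists [::]; split=> // w; rewrite inE => /eqP ->; by right.
  - by left.
  - move=> v; rewrite inE => /andP [_ hvX]; have [h1 h2] := hX v hvX; split=> // htv.
    exact: h1 (tv_child hbot htv).
have hS'S : forall v, S' v -> S v by move=> v [[]|->].
exists (p1 ++ p').
case: (hp1) => hpp1 hlp1 hup1 hSp1; case: (hp') => hpp' hlp' hup' hSp'.
move: (hup') => /= /andP [hxp' hup''].
have hnotZ : forall v, v \in p' -> v \in X -> v \notin Z /\ ~~ (v \in r :: p1).
  move=> v hv hvX.
  have hXv : Xset e S r x v.
    case: (hSp' v); first by rewrite inE hv orbT.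
      by [].
    by move=> hvx; subst v; rewrite hv in hxp'.
  have hvx : v != x by apply/eqP => hvx; subst v; case: hXv => _ hh _; exact: hh hBx.
  split.
    apply/negP => hvZ; have [q [hq hvq]] := hZ v hvZ; exact: pref hq hvq hvx hXv.
  rewrite inE negb_or; apply/andP; split.
    apply/eqP => hvr; subst v; case: hXv => _ hh _; exact: hh hBr.
  by apply/negP => hv1; exact: pref hp1 hv1 hvx hXv.
split.
- split.
  + by rewrite cat_path hpp1 hlp1 hpp'.
  + by rewrite last_cat hlp1 hlp'.
  + rewrite -cat_cons cat_uniq hup1 hup'' andbT /=.
    apply/hasPn => v hv.
    have hXv : Xset e S r x v.
      case: (hSp' v); first by rewrite inE hv orbT.
        by [].
      by move=> hvx; subst v; rewrite hv in hxp'.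
    have hvx : v != x by apply/eqP => hvx; subst v; case: hXv => _ hh _; exact: hh hBx.
    rewrite /= inE negb_or; apply/andP; split.
      apply/eqP => hvr; subst v; case: hXv => _ hh _; exact: hh hBr.
    by apply/negP => hv1; exact: pref hp1 hv1 hvx hXv.
  + move=> v; rewrite -cat_cons mem_cat => /orP [hv|hv]; first exact: hSp1.
    by apply: hS'S; apply: hSp'; rewrite inE hv orbT.
- have hsub : [set v in X | v \in r :: p1 ++ p'] \subset
      [set v in X | v \in r :: p1] :|: [set v in X :\: Z | v \in x :: p'].
    apply/subsetP => v; rewrite in_set => /andP [hvX hv].
    rewrite in_setU !in_set hvX /=.
    move: hv; rewrite -cat_cons mem_cat => /orP [->//|hv'].
    apply/orP; right; rewrite andbT inE hv' orbT andbT.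
    by case: (hnotZ v hv' hvX).
  have h1 := subset_leq_card hsub.
  have h2 := cardsU [set v in X | v \in r :: p1] [set v in X :\: Z | v \in x :: p'].
  have h3 := cardsID Z X.
  rewrite h2 in h1; have h4 := leq_trans h1 (leq_subr _ _).
  rewrite -h3; apply: leq_trans (leq_mul (leqnn 2) h4) _; rewrite mulnDr.
  exact: leq_add hc1 hc'.
Qed.
End Aux.

Theorem corollary2 (T : finType) (e : rel T) (r : T) :
  irreflexive e ->
  2 <= #|T| ->
  (forall v, exists p, dpath e (fun _ => True) r v p) ->
  forall (u : T) (X : {set T}),
    (forall v, v \in X -> ~ tree_vertex e (fun _ => True) r v /\ v <> u) ->
    exists p, dpath e (fun _ => True) r u p /\
      2 * #|[set v in X | v \in r :: p]| <= #|X|.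
Proof.
move=> _ _ hreach u X hX.
apply: (@MI T e (size (enum T)) (fun _ => True) r (enum T)) => //;
  by move=> v _; rewrite ?mem_enum.
Qed.
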